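(* Let $T_{init}$ be the number of nodes of the initial tree. The expected optimization time of SMO-GP-single and of SMO-GP-multi on MO-ORDER is $O(n\,T_{init}+n^2\log n)$.
   Context: Fix an integer $n\ge 1$; the terminal set is $T=\{x_1,\bar x_1,\dots,x_n,\bar x_n\}$ ($\bar x_i$ the complement of $x_i$). A syntax tree is either the empty tree or a rooted ordered binary tree whose inner nodes are all labelled by the binary function $J$ (join, exactly two ordered children) and whose leaves are labelled by elements of $T$. The complexity $C(X)$ is the number of nodes of $X$ (0 for the empty tree). The leaf list $l$ of $X$ is the sequence of leaf labels in inorder. ORDER: build a list $S$ by scanning $l$ front to rear and appending a literal only if neither it nor its complement is already in $S$; ORDER$(X)$ is the number of positive literals $x_i$ in $S$. MO-ORDER$(X)=(\mathrm{ORDER}(X),C(X))$, ORDER maximized, $C$ minimized. Mutation (HVL-Prime applied $k$ times): each application chooses uniformly at random one of three operations. Substitute: replace a uniformly random leaf by a uniformly random $u\in T$. Insert: choose a uniformly random node $v$ and uniformly random $u\in T$, replace $v$ by a $J$-node with children $u$ and $v$ in uniformly random order (inserting into the empty tree yields the single leaf $u$). Delete: choose a uniformly random leaf $v$ with parent $p$ and sibling $u$, replace $p$ by $u$ (deleting $p$ and $v$; deleting the only leaf of a one-leaf tree yields the empty tree). For single-operation mutation $k=1$; for multi-operation mutation $k=1+\mathrm{Pois}(1)$ with $\mathrm{Pois}(1)$ Poisson with mean 1. Dominance for MO-$F$: $Y\succeq X$ iff $F(Y)\ge F(X)$ and $C(Y)\le C(X)$; $Y\succ X$ iff $Y\succeq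 X$ and ($F(Y)>F(X)$ or $C(Y)<C(X)$). A tree is Pareto optimal if no tree dominates it; the Pareto front is the set of objective vectors of Pareto optimal trees. SMO-GP: choose an initial tree $X$ and set $P:=\{X\}$; repeat: choose $X\in P$ uniformly at random, let $Y$ be a mutated copy of $X$; if no $Z\in P$ satisfies $Z\succ Y$, set $P:=(P\setminus\{Z\in P: Y\succeq Z\})\cup\{Y\}$. SMO-GP-single uses single-operation, SMO-GP-multi multi-operation mutation. Expected optimization time: expected number of iterations until the population contains, for every objective vector in the Pareto front, a tree with that objective vector. *)

(* Defs.v *)
From Stdlib Require Import Reals List Arith Bool ClassicalEpsilon.
Import ListNotations.
Open Scope R_scope.

(* A literal (i, true) is x_{i+1}, (i, false) is its complement; indices 0..n-1. *)
Definition lit : Type := (nat * bool)%type.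
Definition compl (x : lit) : lit := (fst x, negb (snd x)).
Definition lit_eqb (x y : lit) : bool := Nat.eqb (fst x) (fst y) && Bool.eqb (snd x) (snd y).

Definition terminals (n : nat) : list lit :=
  flat_map (fun i => [(i, true); (i, false)]) (seq 0 n).

Inductive ntree : Type :=
| Leaf : lit -> ntree
| J : ntree -> ntree -> ntree.

(* a syntax tree is either empty (None) or a nonempty tree *)
Definition tree : Type := option ntree.

Fixpoint nleaves (t : ntree) : list lit :=
  match t with Leaf l => [l] | J a b => nleaves a ++ nleaves b end.

Definition leaf_list (X : tree) : list lit :=
  match X with None => [] | Some t => nleaves t end.

Fixpoint nsize (t : ntree) : nat :=
  match t with Leaf _ => 1%nat | J a b => S (nsize a + nsize b) end.

Definition cplx (X : tree) : nat := match X with None => 0%nat | Some t => nsize t end.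

Definition valid_tree (n : nat) (X : tree) : Prop :=
  forall l, In l (leaf_list X) -> In l (terminals n).

Fixpoint order_scan (S : list lit) (l : list lit) : list lit :=
  match l with
  | [] => S
  | x :: l' =>
      if existsb (fun y => lit_eqb y x || lit_eqb y (compl x)) S
      then order_scan S l'
      else order_scan (S ++ [x]) l'
  end.

Definition ORDER (X : tree) : nat :=
  length (filter (fun x : lit => snd x) (order_scan [] (leaf_list X))).

Definition wdom (Y X : tree) : bool :=
  Nat.leb (ORDER X) (ORDER Y) && Nat.leb (cplx Y) (cplx X).
Definition sdom (Y X : tree) : bool :=
  wdom Y X && (Nat.ltb (ORDER X) (ORDER Y) || Nat.ltb (cplx Y) (cplx X)).

Definition pareto_optimal (n : nat) (Y : tree) : Prop :=
  valid_tree n Y /\ forall Z, valid_tree n Z -> sdom Z Y = false.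

Definition covers_front (n : nat) (P : list tree) : Prop :=
  forall Y, pareto_optimal n Y ->
    exists Z, In Z P /\ ORDER Z = ORDER Y /\ cplx Z = cplx Y.

Definition dist (A : Type) : Type := list (R * A).
Definition uniform {A} (l : list A) : dist A :=
  map (fun x => (/ INR (length l), x)) l.
Definition scale {A} (p : R) (d : dist A) : dist A :=
  map (fun px => (p * fst px, snd px)) d.
Definition dbind {A B} (d : dist A) (f : A -> dist B) : dist B :=
  flat_map (fun px => scale (fst px) (f (snd px))) d.
Definition expect {A} (d : dist A) (g : A -> R) : R :=
  fold_right (fun px acc => fst px * g (snd px) + acc) 0 d.

Fixpoint subst_all (u : lit) (t : ntree) : list ntree :=
  match t with
  | Leaf _ => [Leaf u]
  | J a b => map (fun a' => J a' b) (subst_all u a) ++ map (fun b' => J a b') (subst_all u b)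
  end.

Fixpoint ins_all (u : lit) (t : ntree) : list ntree :=
  J (Leaf u) t :: J t (Leaf u) ::
  match t with
  | Leaf _ => []
  | J a b => map (fun a' => J a' b) (ins_all u a) ++ map (fun b' => J a b') (ins_all u b)
  end.

Fixpoint del_all (t : ntree) : list tree :=
  match t with
  | Leaf _ => [None]
  | J a b =>
      map (fun o => match o with None => Some b | Some a' => Some (J a' b) end) (del_all a) ++
      map (fun o => match o with None => Some a | Some b' => Some (J a b') end) (del_all b)
  end.

Definition substitute_outcomes (n : nat) (X : tree) : list tree :=
  match X with
  | None => [None]   (* no leaf to substitute: tree unchanged *)
  | Some t => flat_map (fun u => map Some (subst_all u t)) (terminals n)
  end.
Definition insert_outcomes (n : nat) (X : tree) : list tree :=
  match X with
  | None => map (fun u => Some (Leaf u)) (terminals n)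
  | Some t => flat_map (fun u => map Some (ins_all u t)) (terminals n)
  end.
Definition delete_outcomes (X : tree) : list tree :=
  match X with
  | None => [None]   (* no leaf to delete: tree unchanged *)
  | Some t => del_all t
  end.

Definition hvl_prime (n : nat) (X : tree) : dist tree :=
  scale (1/3) (uniform (substitute_outcomes n X)) ++
  scale (1/3) (uniform (insert_outcomes n X)) ++
  scale (1/3) (uniform (delete_outcomes X)).

Fixpoint hvl_iter (n k : nat) (X : tree) : dist tree :=
  match k with
  | O => [(1, X)]
  | S k' => dbind (hvl_prime n X) (hvl_iter n k')
  end.

(* value of a (convergent) series, chosen classically *)
Definition series (f : nat -> R) : R :=
  epsilon (inhabits 0) (fun l => infinite_sum f l).

(* Expectation operator of a mutation: mutE X g = E[g(Y)], Y mutated copy of X *)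
Definition single_mut (n : nat) (X : tree) (g : tree -> R) : R :=
  expect (hvl_iter n 1 X) g.
(* k = 1 + Pois(1), P(Pois(1) = j) = e^{-1}/j! *)
Definition multi_mut (n : nat) (X : tree) (g : tree -> R) : R :=
  series (fun j => exp (-1) / INR (fact j) * expect (hvl_iter n (S j) X) g).

Inductive algorithm : Type := SMO_GP_single | SMO_GP_multi.

Definition mutation (alg : algorithm) : nat -> tree -> (tree -> R) -> R :=
  match alg with SMO_GP_single => single_mut | SMO_GP_multi => multi_mut end.

Definition smo_update (P : list tree) (Y : tree) : list tree :=
  if existsb (fun Z => sdom Z Y) P then P
  else filter (fun Z => negb (wdom Y Z)) P ++ [Y].

Definition sumR {A} (f : A -> R) (l : list A) : R := fold_right (fun x acc => f x + acc) 0 l.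

(* surv alg n t P = probability that, starting from population P, the population
   does not yet cover the Pareto front after t iterations  (= P(T > t)) *)
Fixpoint surv (alg : algorithm) (n : nat) (t : nat) (P : list tree) : R :=
  if excluded_middle_informative (covers_front n P) then 0 else
  match t with
  | O => 1
  | S t' => / INR (length P) *
            sumR (fun X => mutation alg n X (fun Y => surv alg n t' (smo_update P Y))) P
  end.

(* the expected optimization time from initial tree X0 is the sum over t >= 0 of
   P(T > t) = surv alg n t [X0] *)
Definition expected_time_is (alg : algorithm) (n : nat) (X0 : tree) (E : R) : Prop :=
  infinite_sum (fun t => surv alg n t [X0]) E.

(* Main.v *)
Require Import Defs.
From Stdlib Require Import Reals Lra Lia List Arith Bool ClassicalEpsilon.
Import ListNotations.
Open Scope R_scope.

Lemma expect_app {A} (d1 d2 : Defs.dist A) g : expect (d1 ++ d2) g = expect d1 g + expect d2 g.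
Proof. induction d1 as [|[p x] d IH]; simpl; [lra|rewrite IH; lra]. Qed.

Lemma expect_scale {A} p (d : Defs.dist A) g : expect (scale p d) g = p * expect d g.
Proof. induction d as [|[q x] d IH]; simpl in *; [lra|rewrite IH; lra]. Qed.

Lemma expect_dbind {A B} (d : Defs.dist A) (f : A -> Defs.dist B) g :
  expect (dbind d f) g = expect d (fun x => expect (f x) g).
Proof. induction d as [|[q x] d IH]; simpl; [lra|].
  rewrite expect_app, expect_scale, IH. reflexivity. Qed.

Lemma expect_plus {A} (d : Defs.dist A) g h :
  expect d (fun x => g x + h x) = expect d g + expect d h.
Proof. induction d as [|[q x] d IH]; simpl; [lra|rewrite IH; lra]. Qed.

Lemma expect_mult {A} (d : Defs.dist A) c g :
  expect d (fun x => c * g x) = c * expect d g.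
Proof. induction d as [|[q x] d IH]; simpl; [lra|rewrite IH; lra]. Qed.

Lemma expect_const {A} (d : Defs.dist A) c :
  expect d (fun _ => c) = c * expect d (fun _ => 1).
Proof. induction d as [|[q x] d IH]; simpl; [lra|rewrite IH; lra]. Qed.

Definition gooddist {A} (Q : A -> Prop) (d : Defs.dist A) : Prop :=
  Forall (fun px => 0 <= fst px /\ Q (snd px)) d.

Lemma expect_mono {A} (Q : A -> Prop) (d : Defs.dist A) g h :
  gooddist Q d -> (forall x, Q x -> g x <= h x) -> expect d g <= expect d h.
Proof. intros Hd Hg; induction Hd as [|[q x] d [H1 H2] _ IH]; simpl in *; [lra|].
  specialize (Hg x H2). nra. Qed.

Lemma gooddist_app {A} Q (d1 d2 : Defs.dist A) : gooddist Q d1 -> gooddist Q d2 -> gooddist Q (d1 ++ d2).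
Proof. intros; apply Forall_app; auto. Qed.

Lemma gooddist_scale {A} Q p (d : Defs.dist A) : 0 <= p -> gooddist Q d -> gooddist Q (scale p d).
Proof. intros Hp Hd; induction Hd as [|[q x] d [H1 H2] _ IH]; simpl; constructor; auto.
  simpl in *; split; [nra|auto]. Qed.

Lemma gooddist_dbind {A B} (QA : A -> Prop) (QB : B -> Prop) d f :
  gooddist QA d -> (forall x, QA x -> gooddist QB (f x)) -> gooddist QB (dbind d f).
Proof. intros Hd Hf; induction Hd as [|[q x] d [H1 H2] _ IH]; simpl; [constructor|].
  apply gooddist_app; auto. apply gooddist_scale; auto. Qed.

Lemma gooddist_uniform {A} (Q : A -> Prop) l : (forall x, In x l -> Q x) -> gooddist Q (uniform l).
Proof. intros H. unfold uniform, gooddist. apply Forall_forall. intros [p x] Hin.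
  apply in_map_iff in Hin. destruct Hin as [y [E Hy]]. inversion E; subst. simpl. split; auto.
  destruct (length l). simpl. rewrite Rinv_0; lra. left. apply Rinv_0_lt_compat, lt_0_INR; lia. Qed.

Definition sumR' {A} := @sumR A.

Lemma expect_uniform {A} (l : list A) g : expect (uniform l) g = / INR (length l) * sumR g l.
Proof. unfold uniform. generalize (/ INR (length l)). intros c.
  induction l; simpl; [lra|rewrite IHl; lra]. Qed.

Lemma sumR_const {A} (l : list A) c : sumR (fun _ => c) l = INR (length l) * c.
Proof. induction l; simpl; [lra|rewrite IHl; destruct (length l); simpl; lra]. Qed.

Lemma expect_uniform_const {A} (l : list A) c : l <> [] -> expect (uniform l) (fun _ => c) = c.
Proof. intros H. rewrite expect_uniform, sumR_const. destruct l; [congruence|].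
  field. apply not_0_INR. simpl; lia. Qed.

Lemma sumR_plus {A} (l : list A) f g : sumR (fun x => f x + g x) l = sumR f l + sumR g l.
Proof. induction l; simpl; [lra|rewrite IHl; lra]. Qed.

Lemma sumR_mono {A} (l : list A) f g : (forall x, In x l -> f x <= g x) -> sumR f l <= sumR g l.
Proof. induction l; simpl; intros H; [lra|]. specialize (IHl (fun x Hx => H x (or_intror Hx))).
  specialize (H a (or_introl eq_refl)). lra. Qed.

Lemma sumR_ext {A} (l : list A) f g : (forall x, In x l -> f x = g x) -> sumR f l = sumR g l.
Proof. intros H; apply Rle_antisym; apply sumR_mono; intros x Hx; rewrite H; auto; lra. Qed.

Lemma sumR_app {A} (l1 l2 : list A) f : sumR f (l1 ++ l2) = sumR f l1 + sumR f l2.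
Proof. induction l1; simpl; [lra|rewrite IHl1; lra]. Qed.

Lemma sumR_nonneg {A} (l : list A) f : (forall x, In x l -> 0 <= f x) -> 0 <= sumR f l.
Proof. intros H. rewrite <- (Rmult_0_r (INR (length l))), <- sumR_const. apply sumR_mono; auto. Qed.

Lemma sumR_extract {A} (l : list A) f c x0 d :
  In x0 l -> (forall x, In x l -> f x <= c) -> f x0 <= c - d ->
  sumR f l <= INR (length l) * c - d.
Proof. intros Hin H H0. apply in_split in Hin. destruct Hin as [l1 [l2 ->]].
  rewrite sumR_app. simpl. rewrite app_length. simpl. rewrite plus_INR, S_INR.
  assert (A1 : sumR f l1 <= sumR (fun _ => c) l1) by (apply sumR_mono; intros; apply H; apply in_or_app; auto).
  assert (A2 : sumR f l2 <= sumR (fun _ => c) l2) by (apply sumR_mono; intros; apply H; apply in_or_app; simpl; auto).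
  rewrite !sumR_const in *. lra. Qed.

Definition vars (l : list lit) : list nat := map fst l.
Definition chk (S : list lit) (x : lit) : bool := existsb (fun y => Nat.eqb (fst y) (fst x)) S.

Lemma chk_eq S x : existsb (fun y => lit_eqb y x || lit_eqb y (compl x)) S = chk S x.
Proof. unfold chk. induction S as [|[i b] S IH]; simpl; auto. rewrite IH. f_equal.
  destruct x as [j c]; unfold lit_eqb, compl; simpl. destruct (Nat.eqb i j), b, c; reflexivity. Qed.

Lemma os_cons S x l : order_scan S (x :: l) = if chk S x then order_scan S l else order_scan (S ++ [x]) l.
Proof. simpl. rewrite chk_eq. reflexivity. Qed.

Lemma chk_false S x : chk S x = false <-> ~ In (fst x) (vars S).
Proof. unfold chk, vars. induction S as [|y S IH]; simpl. tauto.
  rewrite orb_false_iff, IH, Nat.eqb_neq. intuition. Qed.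

Lemma chk_app S1 S2 x : chk (S1 ++ S2) x = chk S1 x || chk S2 x.
Proof. unfold chk. apply existsb_app. Qed.

Definition cnt S l := length (filter snd (order_scan S l)).
Definition bn (x : lit) : nat := if snd x then 1%nat else 0%nat.

Lemma lemA x l : forall S1 S2, ~ In (fst x) (vars l) ->
  cnt (S1 ++ x :: S2) l = (cnt (S1 ++ S2) l + bn x)%nat.
Proof. induction l as [|y l IH]; intros S1 S2 H.
  - unfold cnt; simpl. rewrite !filter_app, !length_app. simpl. unfold bn. destruct (snd x); simpl; lia.
  - unfold cnt in *. rewrite !os_cons.
    assert (E : chk (S1 ++ x :: S2) y = chk (S1 ++ S2) y).
    { rewrite !chk_app. f_equal. unfold chk; simpl.
      assert (fst x <> fst y) by (intro E; apply H; simpl; auto).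
      apply Nat.eqb_neq in H0. rewrite H0. reflexivity. }
    rewrite E. assert (H' : ~ In (fst x) (vars l)) by (intro; apply H; simpl; auto).
    destruct (chk (S1 ++ S2) y). apply IH; auto.
    rewrite <- !app_assoc. simpl. apply (IH S1 (S2 ++ [y])); auto. Qed.

Lemma lemB x l2 : forall l1 S, ~ In (fst x) (vars (S ++ l1 ++ l2)) ->
  cnt S (l1 ++ x :: l2) = (cnt S (l1 ++ l2) + bn x)%nat.
Proof. induction l1 as [|y l1 IH]; intros S H; simpl.
  - unfold cnt. rewrite os_cons.
    assert (chk S x = false). { apply chk_false. intro; apply H. unfold vars; rewrite map_app; apply in_or_app; auto. }
    rewrite H0. pose proof (lemA x l2 S [] ) as A. rewrite app_nil_r in A. apply A.
    intro; apply H. unfold vars in *; rewrite map_app; apply in_or_app; auto.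
  - unfold cnt in *. rewrite !os_cons. destruct (chk S y); apply IH.
    + intro; apply H. unfold vars in *. rewrite !map_app in *. simpl.
      apply in_app_or in H0. destruct H0; apply in_or_app; auto. right. simpl. right. auto.
    + rewrite <- app_assoc. exact H.
Qed.

Lemma NoDup_snoc {A} (l : list A) a : NoDup l -> ~ In a l -> NoDup (l ++ [a]).
Proof. induction l; simpl; intros H1 H2.
  - constructor; auto.
  - inversion H1; subst. constructor. rewrite in_app_iff. simpl. intuition.
    apply IHl; auto. Qed.

Lemma os_nodup l : forall S, NoDup (vars S) -> NoDup (vars (order_scan S l)).
Proof. induction l as [|x l IH]; intros S H; simpl; auto. rewrite chk_eq.
  destruct (chk S x) eqn:E; apply IH; auto. unfold vars; rewrite map_app. simpl.
  apply NoDup_snoc; auto. apply chk_false; auto. Qed.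

Lemma os_in l : forall S z, In z (order_scan S l) -> In z S \/ In z l.
Proof. induction l as [|x l IH]; intros S z H; simpl in *; auto. rewrite chk_eq in H.
  destruct (chk S x); apply IH in H; destruct H; auto.
  apply in_app_or in H. destruct H as [H|[H|[]]]; auto. Qed.

Lemma os_len l : forall S, (length (order_scan S l) <= length S + length l)%nat.
Proof. induction l as [|x l IH]; intros S; simpl; try lia. rewrite chk_eq.
  destruct (chk S x). specialize (IH S); lia. specialize (IH (S ++ [x])). rewrite length_app in IH; simpl in IH; lia. Qed.

Lemma nleaves_len t : (2 * length (nleaves t) = nsize t + 1)%nat.
Proof. induction t; simpl; auto. rewrite length_app. lia. Qed.

Lemma order_cplx X : (2 * ORDER X <= cplx X + 1)%nat /\ (ORDER X <= cplx X)%nat.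
Proof. unfold ORDER.
  assert (H : (length (filter (fun x : lit => snd x) (order_scan [] (leaf_list X))) <= length (leaf_list X))%nat).
  { eapply Nat.le_trans. apply filter_length_le. apply (os_len _ []). }
  destruct X as [t|]; simpl in *; [|lia]. pose proof (nleaves_len t). lia. Qed.

Lemma cplx0 X : cplx X = 0%nat -> X = None.
Proof. destruct X as [t|]; auto. destruct t; simpl; intros; lia. Qed.

Lemma in_terminals n x : In x (terminals n) <-> (fst x < n)%nat.
Proof. unfold terminals. rewrite in_flat_map. split.
  - intros [i [Hi Hx]]. apply in_seq in Hi. simpl in Hx. destruct Hx as [<-|[<-|[]]]; simpl; lia.
  - intros H. exists (fst x). split. apply in_seq; lia. destruct x as [i [|]]; simpl; auto. Qed.

Lemma nodup_map_filter (f : lit -> nat) (p : lit -> bool) l : NoDup (map f l) -> NoDup (map f (filter p l)).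
Proof. induction l; simpl; intros H; auto. inversion H; subst. destruct (p a); simpl; auto.
  constructor; auto. intro Hin. apply H2. apply in_map_iff in Hin. destruct Hin as [y [E Hy]].
  apply filter_In in Hy. apply in_map_iff. exists y; intuition. Qed.

Lemma order_le_n n X : valid_tree n X -> (ORDER X <= n)%nat.
Proof. intros HV. unfold ORDER.
  generalize (os_nodup (leaf_list X) [] (NoDup_nil _)).
  generalize (os_in (leaf_list X) []).
  generalize (order_scan [] (leaf_list X)). intros L HL ND0.
  assert (ND : NoDup (map fst (filter (fun x : lit => snd x) L))) by (apply nodup_map_filter; exact ND0).
  assert (H : (length (map fst (filter (fun x : lit => snd x) L)) <= length (seq 0 n))%nat).
  { apply NoDup_incl_length; auto. intros i Hi. apply in_map_iff in Hi. destruct Hi as [x [<- Hx]].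
    apply filter_In in Hx. destruct Hx as [Hx _]. apply HL in Hx. destruct Hx as [[]|Hx].
    apply HV in Hx. apply in_terminals in Hx. apply in_seq. lia. }
  rewrite length_map, length_seq in H. exact H. Qed.

Lemma subst_all_leaves u t : forall Y, In Y (subst_all u t) ->
  forall l, In l (nleaves Y) -> l = u \/ In l (nleaves t).
Proof. induction t as [x|a IHa b IHb]; simpl; intros Y HY l Hl.
  - destruct HY as [<-|[]]. simpl in Hl. destruct Hl as [<-|[]]; auto.
  - apply in_app_or in HY. destruct HY as [HY|HY]; apply in_map_iff in HY; destruct HY as [Y' [<- HY']];
    simpl in Hl; apply in_app_or in Hl; destruct Hl as [Hl|Hl].
    + destruct (IHa Y' HY' l Hl); auto. right; apply in_or_app; auto.
    + right; apply in_or_app; auto.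
    + right; apply in_or_app; auto.
    + destruct (IHb Y' HY' l Hl); auto. right; apply in_or_app; auto.
Qed.

Lemma subst_all_nonempty u t : subst_all u t <> [].
Proof. induction t; simpl; try congruence. destruct (subst_all u t1); simpl; congruence. Qed.

Lemma ins_all_spec u t : forall Y, In Y (ins_all u t) -> nsize Y = (nsize t + 2)%nat /\
  exists l1 l2, nleaves Y = l1 ++ u :: l2 /\ l1 ++ l2 = nleaves t.
Proof. induction t as [x|a IHa b IHb]; simpl; intros Y HY.
  - destruct HY as [<-|[<-|[]]]; simpl; split; try lia.
    + exists [], [x]; auto.
    + exists [x], []; auto.
  - destruct HY as [<-|[<-|HY]].
    + simpl. split; [lia|]. exists [], (nleaves a ++ nleaves b); auto.
    + simpl. split; [lia|]. exists (nleaves a ++ nleaves b), []; rewrite app_nil_r; auto.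
    + apply in_app_or in HY. destruct HY as [HY|HY]; apply in_map_iff in HY; destruct HY as [Y' [<- HY']].
      * destruct (IHa Y' HY') as [Hs [l1 [l2 [E1 E2]]]]. simpl. split; [lia|].
        exists l1, (l2 ++ nleaves b). rewrite E1, <- E2. rewrite <- !app_assoc. auto.
      * destruct (IHb Y' HY') as [Hs [l1 [l2 [E1 E2]]]]. simpl. split; [lia|].
        exists (nleaves a ++ l1), l2. rewrite E1, <- E2. rewrite <- !app_assoc. auto.
Qed.

Lemma ins_all_len u t : length (ins_all u t) = (2 * nsize t)%nat.
Proof. induction t; simpl; auto. rewrite length_app, !length_map, IHt1, IHt2. lia. Qed.

Lemma del_all_spec t : forall o, In o (del_all t) ->
  (forall l, In l (leaf_list o) -> In l (nleaves t)) /\ (cplx o < nsize t)%nat.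
Proof. induction t as [x|a IHa b IHb]; simpl; intros o Ho.
  - destruct Ho as [<-|[]]. simpl. split; [tauto|lia].
  - apply in_app_or in Ho. destruct Ho as [Ho|Ho]; apply in_map_iff in Ho; destruct Ho as [o' [<- Ho']].
    + destruct (IHa o' Ho') as [H1 H2]. destruct o' as [a'|]; simpl in *.
      * split; [|lia]. intros l Hl. apply in_app_or in Hl. apply in_or_app. destruct Hl; auto.
      * split; [|lia]. intros l Hl. apply in_or_app; auto.
    + destruct (IHb o' Ho') as [H1 H2]. destruct o' as [b'|]; simpl in *.
      * split; [|lia]. intros l Hl. apply in_app_or in Hl. apply in_or_app. destruct Hl; auto.
      * split; [|lia]. intros l Hl. apply in_or_app; auto.
Qed.

Lemma del_all_nonempty t : del_all t <> [].
Proof. induction t; simpl; try congruence. destruct (del_all t1); simpl; congruence. Qed.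

Lemma terminals_nonempty n : (1 <= n)%nat -> terminals n <> [].
Proof. intros H. destruct n; [lia|]. unfold terminals; simpl. congruence. Qed.

Lemma sub_valid n X Y : valid_tree n X -> In Y (substitute_outcomes n X) -> valid_tree n Y.
Proof. destruct X as [t|]; simpl; intros HV HY.
  - apply in_flat_map in HY. destruct HY as [u [Hu HY]]. apply in_map_iff in HY. destruct HY as [Y' [<- HY']].
    intros l Hl. simpl in Hl. destruct (subst_all_leaves u t Y' HY' l Hl) as [->|H]; auto.
  - destruct HY as [<-|[]]; auto. Qed.

Lemma ins_valid n X Y : valid_tree n X -> In Y (insert_outcomes n X) -> valid_tree n Y.
Proof. destruct X as [t|]; simpl; intros HV HY.
  - apply in_flat_map in HY. destruct HY as [u [Hu HY]]. apply in_map_iff in HY. destruct HY as [Y' [<- HY']].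
    intros l Hl. simpl in Hl. destruct (ins_all_spec u t Y' HY') as [_ [l1 [l2 [E1 E2]]]].
    rewrite E1 in Hl. apply in_app_or in Hl. destruct Hl as [Hl|[<-|Hl]]; auto; apply HV; simpl; rewrite <- E2; apply in_or_app; auto.
  - apply in_map_iff in HY. destruct HY as [u [<- Hu]]. intros l [<-|[]]; auto. Qed.

Lemma del_valid n X Y : valid_tree n X -> In Y (delete_outcomes X) -> valid_tree n Y.
Proof. destruct X as [t|]; simpl; intros HV HY.
  - intros l Hl. apply HV. simpl. apply (del_all_spec t Y HY); auto.
  - destruct HY as [<-|[]]; auto. Qed.

Lemma hvl_good n X : valid_tree n X -> gooddist (valid_tree n) (hvl_prime n X).
Proof. intros HV. unfold hvl_prime. repeat apply gooddist_app; apply gooddist_scale; try lra;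
  apply gooddist_uniform; intros; eauto using sub_valid, ins_valid, del_valid. Qed.

Lemma outcomes_nonempty n X : (1 <= n)%nat ->
  substitute_outcomes n X <> [] /\ insert_outcomes n X <> [] /\ delete_outcomes X <> [].
Proof. intros Hn. pose proof (terminals_nonempty n Hn) as HT.
  destruct X as [t|]; simpl; repeat split; try congruence.
  - destruct (terminals n) as [|u l]; [congruence|]. simpl. pose proof (subst_all_nonempty u t).
    destruct (subst_all u t); simpl; congruence.
  - destruct (terminals n) as [|u l]; [congruence|]. simpl. destruct t; simpl; congruence.
  - apply del_all_nonempty.
  - destruct (terminals n); simpl; congruence.
Qed.

Lemma expect_hvl n X g : expect (hvl_prime n X) g =
  1/3 * expect (uniform (substitute_outcomes n X)) g +
  1/3 * expect (uniform (insert_outcomes n X)) g +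
  1/3 * expect (uniform (delete_outcomes X)) g.
Proof. unfold hvl_prime. rewrite !expect_app, !expect_scale. lra. Qed.

Lemma hvl_mass n X : (1 <= n)%nat -> expect (hvl_prime n X) (fun _ => 1) = 1.
Proof. intros Hn. destruct (outcomes_nonempty n X Hn) as [H1 [H2 H3]].
  rewrite expect_hvl, !expect_uniform_const; auto. lra. Qed.

Lemma iter_good n k : forall X, valid_tree n X -> gooddist (valid_tree n) (hvl_iter n k X).
Proof. induction k; intros X HV; simpl. repeat constructor; simpl; auto; lra.
  apply gooddist_dbind with (QA := valid_tree n); auto using hvl_good. Qed.

Lemma iter_mass n k : (1 <= n)%nat -> forall X, valid_tree n X -> expect (hvl_iter n k X) (fun _ => 1) = 1.
Proof. intros Hn. induction k; intros X HV; simpl. lra.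
  rewrite expect_dbind. transitivity (expect (hvl_prime n X) (fun _ => 1)); [|apply hvl_mass; auto].
  apply Rle_antisym; apply (expect_mono (valid_tree n)); auto using hvl_good; intros; cbv beta; rewrite IHk; auto; lra. Qed.

Lemma expect_nonneg {A} Q (d : Defs.dist A) g : gooddist Q d -> (forall x, Q x -> 0 <= g x) -> 0 <= expect d g.
Proof. intros Hd Hg. replace 0 with (expect d (fun _ => 0)).
  apply (expect_mono Q); auto. rewrite expect_const; lra. Qed.

Lemma uniform_nonneg {A} (l : list A) g : (forall x, 0 <= g x) -> 0 <= expect (uniform l) g.
Proof. intros H. apply (expect_nonneg (fun _ => True)); auto. apply gooddist_uniform; auto. Qed.

Lemma uniform_ext {A} (l : list A) g h : (forall x, In x l -> g x = h x) ->
  expect (uniform l) g = expect (uniform l) h.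
Proof. intros H. rewrite !expect_uniform. f_equal. apply sumR_ext; auto. Qed.

Definition gA (c : nat) (Y : tree) : R := if Nat.ltb (cplx Y) c then 1 else 0.

Lemma del_event n t : (1 <= n)%nat -> 1/3 <= expect (hvl_prime n (Some t)) (gA (nsize t)).
Proof. intros Hn. rewrite expect_hvl.
  assert (E : expect (uniform (delete_outcomes (Some t))) (gA (nsize t)) = 1).
  { rewrite (uniform_ext _ _ (fun _ => 1)). apply expect_uniform_const. apply del_all_nonempty.
    intros o Ho. unfold gA. destruct (del_all_spec t o Ho) as [_ H]. apply Nat.ltb_lt in H. rewrite H. auto. }
  rewrite E. assert (0 <= expect (uniform (substitute_outcomes n (Some t))) (gA (nsize t))) by
    (apply uniform_nonneg; intros; unfold gA; destruct Nat.ltb; lra).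
  assert (0 <= expect (uniform (insert_outcomes n (Some t))) (gA (nsize t))) by
    (apply uniform_nonneg; intros; unfold gA; destruct Nat.ltb; lra).
  lra. Qed.

Definition gB (m : nat) (Y : tree) : R :=
  if Nat.eqb (ORDER Y) (S m) && Nat.eqb (cplx Y) (2 * S m - 1) then 1 else 0.

Lemma gB_range m Y : 0 <= gB m Y <= 1.
Proof. unfold gB. destruct (_ && _); lra. Qed.

Lemma sumR_flat_map {A B} (f : B -> R) (h : A -> list B) L :
  sumR f (flat_map h L) = sumR (fun u => sumR f (h u)) L.
Proof. induction L; simpl; auto. rewrite sumR_app, IHL. auto. Qed.

Lemma sumR_map {A B} (f : B -> R) (h : A -> B) L : sumR f (map h L) = sumR (fun x => f (h x)) L.
Proof. induction L; simpl; auto. rewrite IHL; auto. Qed.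

Lemma sumR_terminals (f : lit -> R) n :
  sumR f (terminals n) = sumR (fun i => f (i, true) + f (i, false)) (seq 0 n).
Proof. unfold terminals. rewrite sumR_flat_map. apply sumR_ext. intros; simpl. lra. Qed.

Lemma length_flat_map_const {A B} (h : A -> list B) L c : (forall u, length (h u) = c) ->
  length (flat_map h L) = (length L * c)%nat.
Proof. intros H; induction L; simpl; auto. rewrite length_app, IHL, H. lia. Qed.

Lemma length_terminals n : length (terminals n) = (2 * n)%nat.
Proof. unfold terminals. rewrite (length_flat_map_const _ _ 2); auto. rewrite length_seq. lia. Qed.

Definition fr (V : list nat) (i : nat) : bool := existsb (fun j => Nat.eqb i j) V.

Lemma filter_lt_S V n : length (filter (fun j => Nat.ltb j (S n)) V) =
  (length (filter (fun j => Nat.ltb j n) V) + length (filter (fun j => Nat.eqb n j) V))%nat.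
Proof. induction V as [|j V IH]; simpl; auto.
  destruct (Nat.ltb_spec j (S n)), (Nat.ltb_spec j n), (Nat.eqb_spec n j); simpl; try lia. Qed.

Lemma fresh_count V n : INR n <= sumR (fun i => if fr V i then 0 else 1) (seq 0 n) +
  INR (length (filter (fun j => Nat.ltb j n) V)).
Proof. induction n. simpl. induction V; simpl; auto; try lra. 
  - rewrite seq_S, sumR_app, filter_lt_S, plus_INR, S_INR. simpl.
    destruct (fr V n) eqn:E.
    + assert (1 <= length (filter (fun j => Nat.eqb n j) V))%nat.
      { unfold fr in E. apply existsb_exists in E. destruct E as [j [Hj E]].
        destruct (filter (fun j => Nat.eqb n j) V) eqn:F. 
        assert (In j (filter (fun j => Nat.eqb n j) V)) by (apply filter_In; auto). rewrite F in H; destruct H.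
        simpl; lia. }
      apply le_INR in H. simpl in H. lra.
    + pose proof (pos_INR (length (filter (fun j => Nat.eqb n j) V))). lra.
Qed.

Lemma fresh_count' V n : INR n - INR (length V) <= sumR (fun i => if fr V i then 0 else 1) (seq 0 n).
Proof. pose proof (fresh_count V n). pose proof (filter_length_le (fun j => Nat.ltb j n) V).
  apply le_INR in H0. lra. Qed.

Lemma order_leaf i : ORDER (Some (Leaf (i, true))) = 1%nat.
Proof. reflexivity. Qed.
Lemma order_leaf_f i : ORDER (Some (Leaf (i, false))) = 0%nat.
Proof. reflexivity. Qed.

Lemma ins_fresh t i m : ORDER (Some t) = m -> ~ In i (vars (nleaves t)) ->
  forall Y, In Y (ins_all (i, true) t) -> gB m (Some Y) = 1 \/ nsize t <> (2 * m - 1)%nat.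
Proof. intros HO Hi Y HY. destruct (Nat.eq_dec (nsize t) (2*m-1)) as [Hs|Hs]; auto. left.
  destruct (ins_all_spec _ t Y HY) as [Hsz [l1 [l2 [E1 E2]]]].
  assert (HO' : ORDER (Some Y) = S m).
  { unfold ORDER; simpl. change (cnt [] (nleaves Y) = S m). rewrite E1, lemB.
    - unfold bn; simpl. unfold ORDER in HO; simpl in HO. change (cnt [] (nleaves t) = m) in HO.
      rewrite <- E2 in HO. rewrite HO. lia.
    - simpl. rewrite E2. exact Hi. }
  unfold gB. rewrite HO'. simpl cplx. rewrite Hsz, Hs, Nat.eqb_refl. simpl.
  assert (1 <= m)%nat. { destruct t; simpl in Hs; lia. }
  replace (m + (m + 0) - 1 + 2)%nat with (m + S (m + 0) - 0)%nat by lia. rewrite Nat.eqb_refl. auto. Qed.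

Lemma ins_event n Z m : (1 <= n)%nat -> ORDER Z = m -> cplx Z = (2 * m - 1)%nat -> (m < n)%nat ->
  INR (n - m) / (6 * INR n) <= expect (hvl_prime n Z) (gB m).
Proof. intros Hn HO HC Hm. rewrite expect_hvl.
  assert (0 <= expect (uniform (substitute_outcomes n Z)) (gB m)) by
    (apply uniform_nonneg; intros; apply gB_range).
  assert (0 <= expect (uniform (delete_outcomes Z)) (gB m)) by
    (apply uniform_nonneg; intros; apply gB_range).
  assert (HnR : 0 < INR n) by (apply lt_0_INR; lia).
  rewrite minus_INR by lia.
  enough (INR (n - m) / (2 * INR n) <= expect (uniform (insert_outcomes n Z)) (gB m)) by
    (rewrite minus_INR in H1 by lia;
     assert ((INR n - INR m) / (6 * INR n) = 1/3 * ((INR n - INR m) / (2 * INR n))) by (field; lra); lra).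
  rewrite expect_uniform. destruct Z as [t|]; simpl insert_outcomes.
  - set (s := nsize t).
    rewrite (length_flat_map_const _ _ (2 * s)%nat) by (intros; rewrite length_map, ins_all_len; auto).
    rewrite length_terminals, sumR_flat_map, sumR_terminals.
    assert (Hs1 : (1 <= s)%nat) by (unfold s; destruct t; simpl; lia).
    assert (HL : length (vars (nleaves t)) = m). { unfold vars; rewrite length_map. pose proof (nleaves_len t).
      simpl in HC. unfold s in *. change (@length lit (nleaves t) = m). lia. }
    assert (Hsum : INR (2 * s) * (INR n - INR m) <=
      sumR (fun i => sumR (gB m) (map Some (ins_all (i, true) t)) + sumR (gB m) (map Some (ins_all (i, false) t))) (seq 0 n)).
    { pose proof (fresh_count' (vars (nleaves t)) n) as F. rewrite HL in F.
      apply Rle_trans with (sumR (fun i => INR (2 * s) * (if fr (vars (nleaves t)) i then 0 else 1)) (seq 0 n)).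
      - clear -F. assert (G : forall l c, sumR (fun i => c * (if fr (vars (nleaves t)) i then 0 else 1)) l = c * sumR (fun i => if fr (vars (nleaves t)) i then 0 else 1) l)
          by (induction l; intros; simpl; [lra|rewrite IHl; lra]).
        rewrite G. apply Rmult_le_compat_l; auto. apply pos_INR.
      - apply sumR_mono. intros i _. 
        assert (0 <= sumR (gB m) (map Some (ins_all (i, false) t))) by (apply sumR_nonneg; intros; apply gB_range).
        destruct (fr (vars (nleaves t)) i) eqn:E.
        + assert (0 <= sumR (gB m) (map Some (ins_all (i, true) t))) by (apply sumR_nonneg; intros; apply gB_range). lra.
        + rewrite sumR_map. rewrite (sumR_ext _ _ (fun _ => 1)).
          * rewrite sumR_const, ins_all_len. unfold s. lra.
          * intros Y HY. assert (Hi : ~ In i (vars (nleaves t))).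
            { intro Hin. unfold fr in E. assert (existsb (fun j => Nat.eqb i j) (vars (nleaves t)) = true).
              apply existsb_exists. exists i; split; auto. apply Nat.eqb_refl. congruence. }
            destruct (ins_fresh t i m HO Hi Y HY); auto. simpl in HC; exfalso; lia. }
    rewrite !mult_INR. rewrite mult_INR in Hsum. replace (INR 2) with 2 in * by (simpl; lra).
    rewrite minus_INR by lia.
    assert (0 < INR s) by (apply lt_0_INR; lia).
    apply Rle_trans with (/ (2 * INR n * (2 * INR s)) * (2 * INR s * (INR n - INR m))).
    + right. field. lra.
    + apply Rmult_le_compat_l; [|lra]. left; apply Rinv_0_lt_compat. nra.
  - change (ORDER None) with 0%nat in HO. subst m.
    rewrite length_map, length_terminals, sumR_map, sumR_terminals.
    rewrite (sumR_ext _ _ (fun _ => 1)).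
    + rewrite sumR_const, length_seq, mult_INR. replace (INR 2) with 2 by (simpl; lra). rewrite Nat.sub_0_r. right. field. lra.
    + intros i _. unfold gB. rewrite order_leaf, order_leaf_f. simpl. lra.
Qed.

Lemma expect_ext {A} (d : Defs.dist A) f g : (forall x, f x = g x) -> expect d f = expect d g.
Proof. intros H; induction d as [|[p x] d IH]; simpl; auto. rewrite IH, H; auto. Qed.

Lemma infsum_ext f g l : (forall j, f j = g j) -> infinite_sum f l -> infinite_sum g l.
Proof. intros H Hf eps Heps. destruct (Hf eps Heps) as [N HN]. exists N. intros m Hm.
  rewrite <- (sum_eq f g m); auto. Qed.

Lemma infsum_scal f l c : infinite_sum f l -> infinite_sum (fun j => c * f j) (c * l).
Proof. intros Hf. assert (Hc : Un_cv (fun _ => c) c).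
  { intros eps He. exists 0%nat. intros; unfold Rdist. rewrite Rminus_diag, Rabs_R0. lra. }
  pose proof (CV_mult _ _ _ _ Hc Hf) as H. intros eps He. destruct (H eps He) as [N HN].
  exists N. intros m Hm. rewrite <- (sum_eq (fun j => f j * c)). rewrite <- scal_sum. apply HN; auto.
  intros; ring. Qed.

Lemma infsum_plus f g l1 l2 : infinite_sum f l1 -> infinite_sum g l2 ->
  infinite_sum (fun j => f j + g j) (l1 + l2).
Proof. intros Hf Hg. pose proof (CV_plus _ _ _ _ Hf Hg) as H. intros eps He. destruct (H eps He) as [N HN].
  exists N. intros m Hm. rewrite plus_sum. apply HN; auto. Qed.

Lemma series_eq f l : infinite_sum f l -> series f = l.
Proof. intros H. unfold series. apply (uniqueness_sum f). 
  apply (epsilon_spec (inhabits 0) (fun l => infinite_sum f l)). exists l; auto. auto. Qed.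

Definition w (j : nat) : R := exp (-1) / INR (fact j).

Lemma w_pos j : 0 < w j.
Proof. unfold w. apply Rdiv_lt_0_compat. apply exp_pos. apply lt_0_INR, lt_O_fact. Qed.

Lemma w_sum : infinite_sum w 1.
Proof. pose proof (proj2_sig (exist_exp 1)) as H. simpl in H. fold (exp 1) in H.
  unfold exp_in in H. apply (infsum_scal _ _ (exp (-1))) in H.
  replace 1 with (exp (-1) * exp 1).
  - apply infsum_ext with (f := fun j => exp (-1) * (/ INR (fact j) * 1 ^ j)); auto.
    intros j. unfold w. rewrite pow1. field. apply INR_fact_neq_0.
  - rewrite <- exp_plus. replace (-1 + 1) with 0 by ring. apply exp_0. Qed.

Definition bnd n (g : tree -> R) := exists B, forall Y, valid_tree n Y -> 0 <= g Y <= B.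
Definition qf alg := match alg with SMO_GP_single => 1 | SMO_GP_multi => exp (-1) end.

Lemma bnd_plus n g h : bnd n g -> bnd n h -> bnd n (fun Y => g Y + h Y).
Proof. intros [B1 H1] [B2 H2]. exists (B1 + B2). intros Y HY. specialize (H1 Y HY); specialize (H2 Y HY); lra. Qed.
Lemma bnd_scal n g c : 0 <= c -> bnd n g -> bnd n (fun Y => c * g Y).
Proof. intros Hc [B H]. exists (c * B). intros Y HY. specialize (H Y HY). split; nra. Qed.
Lemma bnd_const n c : 0 <= c -> bnd n (fun _ => c).
Proof. intros; exists c; intros; lra. Qed.

Lemma iter_bound n k X g B : (1 <= n)%nat -> valid_tree n X -> (forall Y, valid_tree n Y -> 0 <= g Y <= B) ->
  0 <= expect (hvl_iter n k X) g <= B.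
Proof. intros Hn HX H. split.
  - apply (expect_nonneg (valid_tree n)); auto using iter_good. intros; apply H; auto.
  - rewrite <- (Rmult_1_r B), <- (iter_mass n k Hn X HX), <- expect_mult.
    apply (expect_mono (valid_tree n)); auto using iter_good. intros; cbv beta; rewrite Rmult_1_r; apply H; auto. Qed.

Definition aterm n X g j := w j * expect (hvl_iter n (S j) X) g.

Lemma multi_cv n X g : (1 <= n)%nat -> valid_tree n X -> bnd n g ->
  infinite_sum (aterm n X g) (multi_mut n X g).
Proof. intros Hn HX [B HB].
  assert (HB0 : 0 <= B). { destruct (HB None) as [A1 A2]. intros l []. lra. }
  assert (Hcv : {l | Un_cv (fun N => sum_f_R0 (aterm n X g) N) l}).
  { apply Rseries_CV_comp with (Bn := fun j => w j * B).
    - intros j. unfold aterm. pose proof (w_pos j). pose proof (iter_bound n (S j) X g B Hn HX HB). split; nra.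
    - exists (B * 1). pose proof (infsum_scal _ _ B w_sum) as H.
      apply infsum_ext with (f := fun j => B * w j); auto. intros; ring. }
  destruct Hcv as [l Hl]. unfold multi_mut. fold (aterm n X g). rewrite (series_eq _ l); auto. Qed.

Lemma expect_iter1 n X g : expect (hvl_iter n 1 X) g = expect (hvl_prime n X) g.
Proof. simpl. rewrite expect_dbind. apply expect_ext. intros; simpl; ring. Qed.

Section Props.
Variables (alg : algorithm) (n : nat) (X : tree).
Hypothesis Hn : (1 <= n)%nat.
Hypothesis HX : valid_tree n X.
Let M := mutation alg n X.

Lemma mut_plus g h : bnd n g -> bnd n h -> M (fun Y => g Y + h Y) = M g + M h.
Proof. intros Hg Hh. unfold M. destruct alg; simpl.
  - unfold single_mut. apply expect_plus.
  - apply (uniqueness_sum (aterm n X (fun Y => g Y + h Y))). apply multi_cv; auto using bnd_plus.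
    apply infsum_ext with (f := fun j => aterm n X g j + aterm n X h j).
    + intros j; unfold aterm; rewrite expect_plus; ring.
    + apply infsum_plus; apply multi_cv; auto. Qed.

Lemma mut_scal c g : 0 <= c -> bnd n g -> M (fun Y => c * g Y) = c * M g.
Proof. intros Hc Hg. unfold M. destruct alg; simpl.
  - unfold single_mut. apply expect_mult.
  - apply (uniqueness_sum (aterm n X (fun Y => c * g Y))). apply multi_cv; auto using bnd_scal.
    apply infsum_ext with (f := fun j => c * aterm n X g j).
    + intros j; unfold aterm; rewrite expect_mult; ring.
    + apply infsum_scal; apply multi_cv; auto. Qed.

Lemma mut_mono g h : bnd n g -> bnd n h -> (forall Y, valid_tree n Y -> g Y <= h Y) -> M g <= M h.
Proof. intros Hg Hh Hgh. unfold M. destruct alg; simpl.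
  - unfold single_mut. apply (expect_mono (valid_tree n)); auto using iter_good.
  - apply (@Rle_cv_lim (fun N => sum_f_R0 (aterm n X g) N) (fun N => sum_f_R0 (aterm n X h) N)).
    + intros N. apply sum_Rle. intros j _. unfold aterm. apply Rmult_le_compat_l. left; apply w_pos.
      apply (expect_mono (valid_tree n)); auto using iter_good.
    + apply multi_cv; auto.
    + apply multi_cv; auto. Qed.

Lemma mut_const c : 0 <= c -> M (fun _ => c) = c.
Proof. intros Hc. unfold M. destruct alg; simpl.
  - unfold single_mut. rewrite expect_const, iter_mass; auto; ring.
  - apply (uniqueness_sum (aterm n X (fun _ => c))). apply multi_cv; auto using bnd_const.
    apply infsum_ext with (f := fun j => c * w j).
    + intros j; unfold aterm; rewrite expect_const, iter_mass; auto; ring.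
    + pose proof (infsum_scal _ _ c w_sum) as H. rewrite Rmult_1_r in H. exact H. Qed.

Lemma mut_nonneg g : bnd n g -> 0 <= M g.
Proof. intros Hg. apply Rle_trans with (M (fun _ => 0)). rewrite mut_const; lra.
  apply mut_mono; [apply bnd_const; lra | exact Hg |].
  intros Y HY. destruct Hg as [B HB]. apply HB; auto. Qed.

Lemma mut_first g : bnd n g -> qf alg * expect (hvl_prime n X) g <= M g.
Proof. intros Hg. unfold M. destruct alg; simpl.
  - unfold single_mut. rewrite expect_iter1. lra.
  - pose proof (sum_incr (aterm n X g) 0 _ (multi_cv n X g Hn HX Hg)) as H.
    simpl in H. unfold aterm, w in H. rewrite expect_iter1 in H. simpl in H.
    replace (exp (-1) / 1) with (exp (-1)) in H by field. apply H.
    intros j. change (0 <= w j * expect (hvl_iter n (S j) X) g). pose proof (w_pos j). destruct Hg as [B HB].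
    pose proof (iter_bound n (S j) X g B Hn HX HB). nra. Qed.
End Props.

Lemma qf_bound alg : / 3 <= qf alg <= 1.
Proof. destruct alg; simpl. lra. split.
  - pose proof exp_le_3. pose proof (exp_pos 1). rewrite <- (Rinv_inv 3).
    assert (exp (-1) = / exp 1). { rewrite <- exp_Ropp. f_equal; ring. }
    rewrite H1. apply Rinv_le_contravar; lra.
  - assert (exp (-1) <= exp 0). { apply exp_le_3 || (left; apply exp_increasing; lra). }
    rewrite exp_0 in H; auto. Qed.

Lemma frontier Y k : ORDER Y = k -> cplx Y = (2 * k - 1)%nat ->
  (forall Z, sdom Z Y = false) /\ (forall W, wdom W Y = true -> ORDER W = k /\ cplx W = (2 * k - 1)%nat).
Proof. intros HO HC. split.
  - intros Z. destruct (sdom Z Y) eqn:E; auto. exfalso. unfold sdom, wdom in E. rewrite HO, HC in E.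
    pose proof (order_cplx Z).
    repeat rewrite ?andb_true_iff, ?orb_true_iff, ?Nat.leb_le, ?Nat.ltb_lt in E. lia.
  - intros W. unfold wdom. rewrite HO, HC. pose proof (order_cplx W).
    intros H1. apply andb_true_iff in H1. destruct H1 as [H1 H2].
    apply Nat.leb_le in H1, H2. lia. Qed.

Definition hasb (P : list tree) (k : nat) : bool :=
  existsb (fun Z => Nat.eqb (ORDER Z) k && Nat.eqb (cplx Z) (2 * k - 1)) P.

Lemma hasb_spec P k : hasb P k = true <-> exists Z, In Z P /\ ORDER Z = k /\ cplx Z = (2 * k - 1)%nat.
Proof. unfold hasb. rewrite existsb_exists. split.
  - intros [Z [H1 H2]]. apply andb_true_iff in H2. destruct H2 as [H2 H3]. apply Nat.eqb_eq in H2, H3. eauto.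
  - intros [Z [H1 [H2 H3]]]. exists Z. split; auto. rewrite H2, H3, !Nat.eqb_refl. auto. Qed.

Lemma upd_cases P Y : (smo_update P Y = P /\ exists Z, In Z P /\ sdom Z Y = true) \/
  (smo_update P Y = filter (fun Z => negb (wdom Y Z)) P ++ [Y] /\ forall Z, In Z P -> sdom Z Y = false).
Proof. unfold smo_update. destruct (existsb (fun Z => sdom Z Y) P) eqn:E.
  - left. split; auto. apply existsb_exists in E. auto.
  - right. split; auto. intros Z HZ. destruct (sdom Z Y) eqn:F; auto.
    assert (existsb (fun Z => sdom Z Y) P = true) by (apply existsb_exists; eauto). congruence. Qed.

Lemma upd_in P Y Z : In Z (smo_update P Y) -> In Z P \/ Z = Y.
Proof. destruct (upd_cases P Y) as [[-> _]|[-> _]]; auto. intros H. apply in_app_or in H.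
  destruct H as [H|[H|[]]]; auto. apply filter_In in H. tauto. Qed.

Lemma upd_has P Y k : hasb P k = true -> hasb (smo_update P Y) k = true.
Proof. intros H. apply hasb_spec in H. destruct H as [Z [HZ [HO HC]]]. apply hasb_spec.
  destruct (upd_cases P Y) as [[-> _]|[-> _]]; eauto.
  destruct (wdom Y Z) eqn:E.
  - exists Y. split. apply in_or_app; simpl; auto. apply (proj2 (frontier Z k HO HC)); auto.
  - exists Z. split; auto. apply in_or_app. left. apply filter_In. rewrite E; auto. Qed.

Lemma upd_new P Y k : ORDER Y = k -> cplx Y = (2 * k - 1)%nat -> hasb (smo_update P Y) k = true.
Proof. intros HO HC. apply hasb_spec. exists Y. split; auto.
  destruct (upd_cases P Y) as [[_ [Z [_ H]]]|[-> _]].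
  - rewrite (proj1 (frontier Y k HO HC)) in H. discriminate.
  - apply in_or_app; simpl; auto. Qed.

Definition allb (P : list tree) (j : nat) : bool := forallb (hasb P) (seq 0 j).

Lemma allb_spec P j : allb P j = true <-> forall k, (k < j)%nat -> hasb P k = true.
Proof. unfold allb. rewrite forallb_forall. split; intros H k Hk; apply H; apply in_seq in Hk || apply in_seq; lia. Qed.

Lemma upd_allb P Y j : allb P j = true -> allb (smo_update P Y) j = true.
Proof. rewrite !allb_spec. intros H k Hk. apply upd_has; auto. Qed.

Definition minc (P : list tree) : nat := fold_right (fun Z acc => Nat.min (cplx Z) acc) (cplx (hd None P)) P.

Lemma mfold_le a P Z : In Z P -> (fold_right (fun Z acc => Nat.min (cplx Z) acc) a P <= cplx Z)%nat.
Proof. induction P; simpl; intros H; [destruct H|]. destruct H as [<-|H]; [lia|]. specialize (IHP H); lia. Qed.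

Lemma mfold_in a P : fold_right (fun Z acc => Nat.min (cplx Z) acc) a P = a \/
  exists Z, In Z P /\ fold_right (fun Z acc => Nat.min (cplx Z) acc) a P = cplx Z.
Proof. induction P; simpl; auto. destruct IHP as [E|[Z [H E]]]; rewrite E.
  - destruct (Nat.min_spec (cplx a0) a) as [[_ ->]|[_ ->]]; eauto.
  - destruct (Nat.min_spec (cplx a0) (cplx Z)) as [[_ ->]|[_ ->]]; eauto. Qed.

Lemma minc_le P Z : In Z P -> (minc P <= cplx Z)%nat.
Proof. apply mfold_le. Qed.

Lemma minc_in P : P <> [] -> exists Z, In Z P /\ cplx Z = minc P.
Proof. intros HP. unfold minc. destruct (mfold_in (cplx (hd None P)) P) as [E|[Z [H E]]]; eauto.
  rewrite E. exists (hd None P). split; auto. destruct P; [congruence|simpl; auto]. Qed.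

Lemma upd_nonempty P Y : P <> [] -> smo_update P Y <> [].
Proof. intros HP. destruct (upd_cases P Y) as [[-> _]|[-> _]]; auto. destruct (filter _ P); simpl; congruence. Qed.

Lemma upd_minc P Y : P <> [] -> (minc (smo_update P Y) <= minc P)%nat.
Proof. intros HP. destruct (minc_in P HP) as [Z [HZ E]]. rewrite <- E.
  destruct (upd_cases P Y) as [[-> _]|[-> _]]. apply minc_le; auto.
  destruct (wdom Y Z) eqn:W.
  - unfold wdom in W. apply andb_true_iff in W. destruct W as [_ W]. apply Nat.leb_le in W.
    eapply Nat.le_trans; [apply minc_le|exact W]. apply in_or_app; simpl; auto.
  - apply minc_le. apply in_or_app; left; apply filter_In; rewrite W; auto. Qed.

Lemma upd_minc_lt P Y : P <> [] -> (cplx Y < minc P)%nat -> (minc (smo_update P Y) <= cplx Y)%nat.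
Proof. intros HP HY. destruct (upd_cases P Y) as [[_ [Z [HZ H]]]|[-> _]].
  - exfalso. unfold sdom, wdom in H. apply andb_true_iff in H. destruct H as [H _].
    apply andb_true_iff in H. destruct H as [_ H]. apply Nat.leb_le in H. pose proof (minc_le P Z HZ). lia.
  - apply minc_le. apply in_or_app; simpl; auto. Qed.

Lemma hasb0_minc P : P <> [] -> (hasb P 0 = true <-> minc P = 0%nat).
Proof. intros HP. rewrite hasb_spec. split.
  - intros [Z [HZ [_ HC]]]. pose proof (minc_le P Z HZ). simpl in HC. lia.
  - intros E. destruct (minc_in P HP) as [Z [HZ HC]]. exists Z. rewrite E in HC. split; auto.
    pose proof (order_cplx Z). simpl. lia. Qed.

Definition Inv n (P : list tree) : Prop := P <> [] /\ Forall (valid_tree n) P /\ NoDup (map ORDER P).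

Lemma nodup_map_filter' {A} (f : A -> nat) (p : A -> bool) l : NoDup (map f l) -> NoDup (map f (filter p l)).
Proof. induction l; simpl; intros H; auto. inversion H; subst. destruct (p a); simpl; auto.
  constructor; auto. intro Hin. apply H2. apply in_map_iff in Hin. destruct Hin as [y [E Hy]].
  apply filter_In in Hy. apply in_map_iff. exists y; intuition. Qed.

Lemma upd_inv n P Y : Inv n P -> valid_tree n Y -> Inv n (smo_update P Y).
Proof. intros [H1 [H2 H3]] HY. split; [apply upd_nonempty; auto|]. split.
  - apply Forall_forall. intros Z HZ. apply upd_in in HZ. destruct HZ as [HZ| ->]; auto.
    eapply Forall_forall in H2; eauto.
  - destruct (upd_cases P Y) as [[-> _]|[-> Hs]]; auto. rewrite map_app. simpl.
    apply NoDup_snoc. apply nodup_map_filter'; auto.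
    intro Hin. apply in_map_iff in Hin. destruct Hin as [Z [E HZ]]. apply filter_In in HZ.
    destruct HZ as [HZ W]. specialize (Hs Z HZ). unfold sdom, wdom in Hs, W. rewrite E in Hs, W.
    rewrite Nat.leb_refl in Hs, W. simpl in Hs, W. rewrite Nat.ltb_irrefl in Hs. simpl in Hs.
    destruct (Nat.leb_spec (cplx Y) (cplx Z)); [discriminate|].
    destruct (Nat.leb_spec (cplx Z) (cplx Y)), (Nat.ltb_spec (cplx Z) (cplx Y)); simpl in Hs; try discriminate; lia. Qed.

Lemma pop_size n P : Inv n P -> (length P <= S n)%nat.
Proof. intros [_ [H2 H3]]. rewrite <- (length_map ORDER). rewrite <- (length_seq (S n) 0).
  apply NoDup_incl_length; auto. intros k Hk. apply in_map_iff in Hk. destruct Hk as [Z [<- HZ]].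
  eapply Forall_forall in H2; eauto. apply order_le_n in H2. apply in_seq. lia. Qed.

Fixpoint comb (j : nat) : ntree :=
  match j with O => Leaf (0%nat, true) | S j' => J (comb j') (Leaf (S j', true)) end.

Lemma comb_leaves j : nleaves (comb j) = map (fun i => (i, true)) (seq 0 (S j)).
Proof. induction j. reflexivity. cbn [comb nleaves]. rewrite IHj, (seq_S (S j) 0), map_app. reflexivity. Qed.

Lemma comb_props n j : (j < n)%nat -> valid_tree n (Some (comb j)) /\ ORDER (Some (comb j)) = S j /\
  cplx (Some (comb j)) = (2 * S j - 1)%nat.
Proof. intros Hj. split; [|split].
  - intros l Hl. simpl in Hl. rewrite comb_leaves in Hl. apply in_map_iff in Hl. destruct Hl as [i [<- Hi]].
    apply in_terminals. apply in_seq in Hi. simpl. lia.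
  - clear Hj. induction j. reflexivity.
    unfold ORDER in *; simpl in *. change (cnt [] (nleaves (comb j) ++ [(S j, true)]) = S (S j)).
    change (cnt [] (nleaves (comb j)) = S j) in IHj.
    pose proof (lemB (S j, true) [] (nleaves (comb j)) []) as B. rewrite app_nil_r in B.
    transitivity (cnt [] (nleaves (comb j)) + bn (S j, true))%nat.
    + apply B. simpl. rewrite comb_leaves. unfold vars. rewrite map_map. simpl.
      rewrite map_id. rewrite in_seq. lia.
    + unfold bn; simpl. lia.
  - simpl. clear Hj; induction j; simpl in *; lia. Qed.

Lemma sdom_intro Z Y : (ORDER Y <= ORDER Z)%nat -> (cplx Z < cplx Y)%nat -> sdom Z Y = true.
Proof. intros H1 H2. unfold sdom, wdom. apply Nat.leb_le in H1. rewrite H1.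
  assert (cplx Z <=? cplx Y = true)%nat by (apply Nat.leb_le; lia). rewrite H.
  assert (cplx Z <? cplx Y = true)%nat by (apply Nat.ltb_lt; lia). rewrite H0.
  rewrite orb_true_r. auto. Qed.

Lemma covers_allb n P : allb P (S n) = true -> covers_front n P.
Proof. intros HA Y [HY HP]. pose proof (order_le_n n Y HY).
  pose proof (order_cplx Y).
  assert (HC : cplx Y = (2 * ORDER Y - 1)%nat).
  { destruct (Nat.eq_dec (cplx Y) (2 * ORDER Y - 1)) as [E|NE]; auto. exfalso.
    destruct (ORDER Y) as [|j] eqn:Ek.
    - assert (V : valid_tree n None) by (intros l []).
      specialize (HP None V). rewrite sdom_intro in HP; [discriminate| |]; rewrite ?Ek; simpl; lia.
    - destruct (comb_props n j) as [V [O C]]; [lia|]. specialize (HP _ V).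
      rewrite sdom_intro in HP; [discriminate| |]; rewrite ?Ek, ?O, ?C; lia. }
  apply allb_spec with (k := ORDER Y) in HA; [|lia]. apply hasb_spec in HA. destruct HA as [Z [HZ [HO HZC]]].
  exists Z. split; auto. split; auto. lia. Qed.

Section Pot.
Variables (alg : algorithm) (n : nat).
Hypothesis Hn : (1 <= n)%nat.

Definition Ac : R := 3 * INR (S n) / qf alg.
Definition Dc (m : nat) : R := 6 * INR n * INR (S n) / (qf alg * INR (n - m)).
Definition V2 (P : list tree) : R := sumR (fun j => if allb P (S (S j)) then 0 else Dc j) (seq 0 n).
Definition Vall : R := sumR Dc (seq 0 n).
Definition V (P : list tree) : R := if hasb P 0 then V2 P else Ac * INR (minc P) + Vall.

Lemma qf_pos : 0 < qf alg.
Proof. pose proof (qf_bound alg). lra. Qed.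

Lemma Ac_pos : 0 < Ac.
Proof. unfold Ac. pose proof qf_pos. pose proof (lt_0_INR (S n) ltac:(lia)). apply Rdiv_lt_0_compat; lra. Qed.

Lemma Dc_nonneg m : 0 <= Dc m.
Proof. unfold Dc. pose proof qf_pos. pose proof (pos_INR n). pose proof (pos_INR (S n)).
  pose proof (pos_INR (n - m)). destruct H2 as [H2|H2].
  - apply Rmult_le_pos. nra. left. apply Rinv_0_lt_compat. nra.
  - rewrite <- H2, Rmult_0_r. unfold Rdiv. rewrite Rinv_0. lra. Qed.

Lemma V2_nonneg P : 0 <= V2 P.
Proof. apply sumR_nonneg. intros. destruct allb. lra. apply Dc_nonneg. Qed.

Lemma V2_le_Vall P : V2 P <= Vall.
Proof. apply sumR_mono. intros. destruct allb. apply Dc_nonneg. lra. Qed.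

Lemma V_nonneg P : 0 <= V P.
Proof. unfold V. destruct hasb. apply V2_nonneg. pose proof (V2_nonneg P). pose proof (V2_le_Vall P).
  pose proof Ac_pos. pose proof (pos_INR (minc P)). nra. Qed.

Lemma V2_upd P Y : V2 (smo_update P Y) <= V2 P.
Proof. apply sumR_mono. intros j _. destruct (allb P (S (S j))) eqn:E.
  - rewrite (upd_allb P Y _ E). lra.
  - destruct (allb (smo_update P Y) (S (S j))); [apply Dc_nonneg|lra]. Qed.

Lemma V_upd P Y : P <> [] -> V (smo_update P Y) <= V P.
Proof. intros HP. unfold V. destruct (hasb P 0) eqn:E.
  - rewrite (upd_has P Y 0 E). apply V2_upd.
  - pose proof Ac_pos. destruct (hasb (smo_update P Y) 0).
    + pose proof (V2_le_Vall (smo_update P Y)). pose proof (pos_INR (minc P)). nra.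
    + pose proof (upd_minc P Y HP). apply le_INR in H0. nra. Qed.

Lemma sumR_extract2 {A} (l : list A) f g x0 d :
  In x0 l -> (forall x, In x l -> f x <= g x) -> f x0 + d <= g x0 -> sumR f l + d <= sumR g l.
Proof. intros Hin H H0. apply in_split in Hin. destruct Hin as [l1 [l2 ->]].
  rewrite !sumR_app. simpl.
  assert (sumR f l1 <= sumR g l1) by (apply sumR_mono; intros; apply H; apply in_or_app; auto).
  assert (sumR f l2 <= sumR g l2) by (apply sumR_mono; intros; apply H; apply in_or_app; simpl; auto).
  lra. Qed.

Lemma find_level P : allb P 1 = true -> forall k, allb P (S k) = false ->
  exists m, (m < k)%nat /\ allb P (S m) = true /\ allb P (S (S m)) = false.
Proof. intros H1. induction k; intros Hk. congruence.
  destruct (allb P (S k)) eqn:E. exists k; auto. destruct (IHk eq_refl) as [m [A1 A2]]. exists m; split; auto. Qed.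

Definition bndV (P : list tree) : bnd n (fun Y => V (smo_update P Y)) \/ P = [].
Proof. destruct P as [|Z P']. right; auto. left. exists (V (Z :: P')). intros Y _. split. apply V_nonneg.
  apply V_upd. congruence. Qed.

Lemma witness P : Inv n P -> ~ covers_front n P -> exists X0 g0 Dd,
  In X0 P /\ 0 <= Dd /\ (forall Y, valid_tree n Y -> 0 <= g0 Y <= 1) /\
  (forall Y, valid_tree n Y -> V (smo_update P Y) + Dd * g0 Y <= V P) /\
  INR (S n) <= Dd * (qf alg * expect (hvl_prime n X0) g0).
Proof. intros HI HC. pose proof HI as [HP [HV HN]]. destruct (hasb P 0) eqn:E0.
  - assert (HA1 : allb P 1 = true) by (unfold allb; simpl; rewrite E0; auto).
    assert (HAn : allb P (S n) = false) by (destruct (allb P (S n)) eqn:F; auto; exfalso; apply HC, covers_allb; auto).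
    destruct (find_level P HA1 n HAn) as [m [Hm [Am Am1]]].
    assert (Hhm : hasb P m = true) by (apply allb_spec with (j := S m); auto).
    apply hasb_spec in Hhm. destruct Hhm as [Z [HZ [HO HCZ]]].
    exists Z, (gB m), (Dc m). split; auto. split; [apply Dc_nonneg|]. split; [intros; apply gB_range|]. split.
    + intros Y HY. unfold V. rewrite E0, (upd_has P Y 0 E0).
      unfold gB. destruct (Nat.eqb_spec (ORDER Y) (S m)), (Nat.eqb_spec (cplx Y) (2 * S m - 1)); simpl;
        try (rewrite Rmult_0_r, Rplus_0_r; apply V2_upd).
      rewrite Rmult_1_r. unfold V2. apply sumR_extract2 with (x0 := m).
      * apply in_seq; lia.
      * intros j _. destruct (allb P (S (S j))) eqn:E. rewrite (upd_allb P Y _ E). lra.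
        destruct (allb (smo_update P Y) (S (S j))); [apply Dc_nonneg|lra].
      * rewrite Am1. assert (allb (smo_update P Y) (S (S m)) = true).
        { apply allb_spec. intros k Hk. destruct (Nat.eq_dec k (S m)) as [->|NE].
          apply upd_new; auto. apply allb_spec with (j := S m); [apply upd_allb; auto|lia]. }
        rewrite H. lra.
    + pose proof (ins_event n Z m Hn HO HCZ Hm). pose proof qf_pos.
      assert (Hnm : 0 < INR (n - m)) by (apply lt_0_INR; lia).
      assert (HnR : 0 < INR n) by (apply lt_0_INR; lia).
      apply Rle_trans with (Dc m * (qf alg * (INR (n - m) / (6 * INR n)))).
      * right. unfold Dc. field. repeat split; lra.
      * apply Rmult_le_compat_l. apply Dc_nonneg. apply Rmult_le_compat_l; lra.
  - assert (Hmc : minc P <> 0%nat) by (intro F; apply (hasb0_minc P HP) in F; congruence).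
    destruct (minc_in P HP) as [Z [HZ HZc]].
    destruct Z as [t|]; [|simpl in HZc; lia]. simpl in HZc.
    exists (Some t), (gA (minc P)), Ac. split; auto. split; [pose proof Ac_pos; lra|].
    split; [intros; unfold gA; destruct Nat.ltb; lra|]. split.
    + intros Y HY. unfold gA. destruct (Nat.ltb_spec (cplx Y) (minc P)) as [Hlt|Hge].
      * rewrite Rmult_1_r. pose proof (upd_minc_lt P Y HP Hlt). unfold V. rewrite E0.
        pose proof Ac_pos. assert (INR (minc (smo_update P Y)) + 1 <= INR (minc P)).
        { rewrite <- S_INR. apply le_INR. lia. }
        destruct (hasb (smo_update P Y) 0).
        -- pose proof (V2_le_Vall (smo_update P Y)). pose proof (pos_INR (minc (smo_update P Y))). nra.
        -- nra.
      * rewrite Rmult_0_r, Rplus_0_r. apply V_upd; auto.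
    + pose proof (del_event n t Hn). rewrite HZc in H. pose proof qf_pos.
      apply Rle_trans with (Ac * (qf alg * (1/3))).
      * right. unfold Ac. field. lra.
      * apply Rmult_le_compat_l. pose proof Ac_pos; lra. apply Rmult_le_compat_l; lra.
Qed.

Lemma drift P : Inv n P -> ~ covers_front n P ->
  1 + / INR (length P) * sumR (fun X => mutation alg n X (fun Y => V (smo_update P Y))) P <= V P.
Proof. intros HI HC. pose proof HI as [HP [HV HN]].
  destruct (witness P HI HC) as [X0 [g0 [Dd [HX0 [HDd [Hg0 [Hpt Hprob]]]]]]].
  assert (HbV : bnd n (fun Y => V (smo_update P Y))).
  { exists (V P). intros Y _. split. apply V_nonneg. apply V_upd; auto. }
  assert (Hvalid : forall X, In X P -> valid_tree n X) by (intros; eapply Forall_forall; eauto).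
  assert (Hgen : forall X, In X P -> mutation alg n X (fun Y => V (smo_update P Y)) <= V P).
  { intros X HX. rewrite <- (mut_const alg n X Hn (Hvalid X HX) (V P)) by apply V_nonneg.
    apply mut_mono; auto. apply bnd_const, V_nonneg. intros Y _. apply V_upd; auto. }
  assert (Hx0 : mutation alg n X0 (fun Y => V (smo_update P Y)) <= V P - INR (S n)).
  { assert (Hb0 : bnd n g0) by (exists 1; auto).
    pose proof (mut_first alg n X0 Hn (Hvalid X0 HX0) g0 Hb0).
    pose proof (mut_plus alg n X0 Hn (Hvalid X0 HX0) _ _ HbV (bnd_scal n g0 Dd HDd Hb0)).
    pose proof (mut_scal alg n X0 Hn (Hvalid X0 HX0) Dd g0 HDd Hb0).
    assert (mutation alg n X0 (fun Y => V (smo_update P Y) + Dd * g0 Y) <= V P).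
    { rewrite <- (mut_const alg n X0 Hn (Hvalid X0 HX0) (V P)) by apply V_nonneg.
      apply (mut_mono alg n X0 Hn (Hvalid X0 HX0)).
      - exact (bnd_plus _ _ _ HbV (bnd_scal n g0 Dd HDd Hb0)).
      - apply bnd_const, V_nonneg.
      - intros Y HY; apply Hpt; auto. }
    cbv beta in H0.
    assert (Dd * (qf alg * expect (hvl_prime n X0) g0) <= Dd * mutation alg n X0 g0).
    { apply Rmult_le_compat_l; auto. }
    lra. }
  pose proof (sumR_extract P _ (V P) X0 (INR (S n)) HX0 Hgen Hx0).
  pose proof (pop_size n P HI). apply le_INR in H0.
  assert (HL : 0 < INR (length P)) by (destruct P; [congruence|apply lt_0_INR; simpl; lia]).
  apply Rmult_le_compat_l with (r := / INR (length P)) in H; [|left; apply Rinv_0_lt_compat; auto].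
  rewrite Rmult_minus_distr_l, <- Rmult_assoc, Rinv_l in H by lra.
  assert (/ INR (length P) * INR (S n) >= 1).
  { apply Rle_ge. rewrite <- (Rinv_l (INR (length P))) by lra. apply Rmult_le_compat_l; auto.
    left; apply Rinv_0_lt_compat; auto. }
  lra. Qed.
End Pot.

Section Main.
Variables (alg : algorithm) (n : nat).
Hypothesis Hn : (1 <= n)%nat.

Lemma surv_S t P : surv alg n (S t) P =
  if excluded_middle_informative (covers_front n P) then 0 else
  / INR (length P) * sumR (fun X => mutation alg n X (fun Y => surv alg n t (smo_update P Y))) P.
Proof. reflexivity. Qed.

Lemma surv_0 P : surv alg n 0 P = if excluded_middle_informative (covers_front n P) then 0 else 1.
Proof. reflexivity. Qed.

Lemma inv_valid P X : Inv n P -> In X P -> valid_tree n X.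
Proof. intros [_ [H _]] HX. eapply Forall_forall; eauto. Qed.

Lemma len_pos P : Inv n P -> 0 < INR (length P).
Proof. intros [H _]. destruct P; [congruence|apply lt_0_INR; simpl; lia]. Qed.

Lemma avg_bound P (f : tree -> R) B : Inv n P -> (forall X, In X P -> 0 <= f X <= B) ->
  0 <= / INR (length P) * sumR f P <= B.
Proof. intros HI H. pose proof (len_pos P HI).
  assert (0 <= sumR f P) by (apply sumR_nonneg; intros; apply H; auto).
  assert (sumR f P <= INR (length P) * B) by (rewrite <- sumR_const; apply sumR_mono; intros; apply H; auto).
  split. apply Rmult_le_pos; auto. left; apply Rinv_0_lt_compat; auto.
  apply Rmult_le_reg_l with (INR (length P)); auto. rewrite <- Rmult_assoc, Rinv_r by lra. lra. Qed.

Lemma mut_range X g B : valid_tree n X -> (forall Y, valid_tree n Y -> 0 <= g Y <= B) ->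
  0 <= mutation alg n X g <= B.
Proof. intros HX Hg. assert (Hb : bnd n g) by (exists B; auto).
  assert (HB : 0 <= B) by (destruct (Hg None) as [A1 A2]; [intros l []|lra]).
  split. apply mut_nonneg; auto. rewrite <- (mut_const alg n X Hn HX B HB).
  apply mut_mono; auto. apply bnd_const; auto. intros; apply Hg; auto. Qed.

Lemma surv_bound t : forall P, Inv n P -> 0 <= surv alg n t P <= 1.
Proof. induction t; intros P HI.
  - rewrite surv_0. destruct excluded_middle_informative; lra.
  - rewrite surv_S. destruct excluded_middle_informative. lra.
    apply avg_bound; auto. intros X HX. apply mut_range. eapply inv_valid; eauto.
    intros Y HY. apply IHt. apply upd_inv; auto. Qed.

Fixpoint Ssum (t : nat) (P : list tree) : R :=
  match t with O => 0 | S t' => Ssum t' P + surv alg n t' P end.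

Lemma Ssum_bound t : forall P, Inv n P -> 0 <= Ssum t P <= INR t.
Proof. induction t; intros P HI; cbn [Ssum]. simpl; lra. pose proof (IHt P HI). pose proof (surv_bound t P HI).
  rewrite S_INR. lra. Qed.

Lemma surv_cov t P : covers_front n P -> surv alg n t P = 0.
Proof. intros H. destruct t; [rewrite surv_0|rewrite surv_S]; destruct excluded_middle_informative; tauto. Qed.

Lemma Ssum_cov t P : covers_front n P -> Ssum t P = 0.
Proof. intros H. induction t; simpl; auto. rewrite IHt, surv_cov; auto; lra. Qed.

Lemma Ssum_rec t : forall P, Inv n P -> ~ covers_front n P ->
  Ssum (S t) P = 1 + / INR (length P) * sumR (fun X => mutation alg n X (fun Y => Ssum t (smo_update P Y))) P.
Proof. induction t; intros P HI HC.
  - cbn [Ssum]. rewrite surv_0. destruct excluded_middle_informative; [tauto|].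
    rewrite (sumR_ext _ _ (fun _ => 0)). rewrite sumR_const. lra.
    intros X HX. apply mut_const; auto. eapply inv_valid; eauto. lra.
  - change (Ssum (S (S t)) P) with (Ssum (S t) P + surv alg n (S t) P).
    rewrite IHt; auto. rewrite surv_S. destruct excluded_middle_informative; [tauto|].
    rewrite Rplus_assoc, <- Rmult_plus_distr_l, <- sumR_plus. f_equal. f_equal.
    apply sumR_ext. intros X HX. symmetry.
    pose proof (inv_valid P X HI HX) as HX'.
    rewrite <- mut_plus; auto.
    + exists (INR t). intros Y HY. apply Ssum_bound. apply upd_inv; auto.
    + exists 1. intros Y HY. apply surv_bound. apply upd_inv; auto. Qed.

Lemma Ssum_le_V t : forall P, Inv n P -> Ssum t P <= V alg n P.
Proof. induction t; intros P HI.
  - simpl. apply V_nonneg; auto.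
  - destruct (excluded_middle_informative (covers_front n P)) as [HC|HC].
    + rewrite Ssum_cov; auto. apply V_nonneg; auto.
    + rewrite Ssum_rec; auto. eapply Rle_trans; [|apply (drift alg n Hn P HI HC)].
      apply Rplus_le_compat_l. apply Rmult_le_compat_l. left; apply Rinv_0_lt_compat, len_pos; auto.
      apply sumR_mono. intros X HX. pose proof (inv_valid P X HI HX) as HX'.
      apply mut_mono; auto.
      * exists (INR t). intros Y HY. apply Ssum_bound. apply upd_inv; auto.
      * exists (V alg n P). intros Y _. split. apply V_nonneg; auto. apply V_upd; auto. destruct HI; auto.
      * intros Y HY. apply IHt. apply upd_inv; auto. Qed.

Lemma expected_bound X0 : valid_tree n X0 -> exists E, expected_time_is alg n X0 E /\ E <= V alg n [X0].
Proof. intros HX0. assert (HI : Inv n [X0]).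
  { split; [congruence|]. split. constructor; auto. simpl. constructor; auto. constructor. }
  assert (Hps : forall N, sum_f_R0 (fun t => surv alg n t [X0]) N = Ssum (S N) [X0]).
  { induction N; simpl; auto. lra. rewrite IHN. simpl. auto. }
  assert (Hg : Un_growing (fun N => sum_f_R0 (fun t => surv alg n t [X0]) N)).
  { intros N. cbn [sum_f_R0]. pose proof (surv_bound (S N) [X0] HI). lra. }
  assert (Hub : has_ub (fun N => sum_f_R0 (fun t => surv alg n t [X0]) N)).
  { exists (V alg n [X0]). intros x [N ->]. rewrite Hps. apply Ssum_le_V; auto. }
  destruct (growing_cv _ Hg Hub) as [l Hl]. exists l. split. exact Hl.
  apply (@Rle_cv_lim (fun N => sum_f_R0 (fun t => surv alg n t [X0]) N) (fun _ => V alg n [X0])).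
  - intros N. rewrite Hps. apply Ssum_le_V; auto.
  - exact Hl.
  - intros eps He. exists 0%nat. intros. unfold Rdist. rewrite Rminus_diag, Rabs_R0. lra. Qed.
End Main.

Definition Hn (n : nat) : R := sumR (fun m => / INR (n - m)) (seq 0 n).

Lemma Hn_S n : Hn (S n) = / INR (S n) + Hn n.
Proof. unfold Hn. change (seq 0 (S n)) with (0%nat :: seq 1 n). rewrite <- seq_shift.
  change (sumR (fun m => / INR (S n - m)) (0%nat :: map S (seq 0 n))) with
    (/ INR (S n - 0) + sumR (fun m => / INR (S n - m)) (map S (seq 0 n))).
  rewrite sumR_map. f_equal. Qed.

Lemma ln_step x : 0 < x -> ln x + / (x + 1) <= ln (x + 1).
Proof. intros Hx. assert (H : 1 + ln (x / (x + 1)) <= x / (x + 1)).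
  { pose proof (exp_ineq1_le (ln (x / (x+1)))). rewrite exp_ln in H; auto. apply Rdiv_lt_0_compat; lra. }
  unfold Rdiv in H. rewrite ln_mult, ln_Rinv in H by (try apply Rinv_0_lt_compat; lra). assert (x / (x+1) = 1 - / (x + 1)) by (field; lra). lra. Qed.

Lemma Hn_bound n : (1 <= n)%nat -> Hn n <= 1 + ln (INR n).
Proof. induction n; intros H. lia. destruct (Nat.eq_dec n 0) as [->|Hn0].
  - unfold Hn. simpl. rewrite ln_1. lra.
  - rewrite Hn_S. specialize (IHn ltac:(lia)). rewrite S_INR.
    pose proof (ln_step (INR n) ltac:(apply lt_0_INR; lia)). lra. Qed.

Lemma ln_ge n : (1 <= n)%nat -> INR n ^ 2 <= 2 * (INR n ^ 2 * ln (INR n) + 1).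
Proof. intros H. destruct (le_lt_dec 3 n).
  - assert (1 <= ln (INR n)).
    { rewrite <- (ln_exp 1). pose proof exp_le_3. apply le_INR in l. simpl in l.
      assert (exp 1 <= INR n) by lra. destruct (Rle_lt_or_eq_dec _ _ H1) as [H2|H2].
      left; apply ln_increasing; auto; apply exp_pos. rewrite H2; lra. }
    pose proof (pow2_ge_0 (INR n)). nra.
  - destruct n as [|[|[|]]]; try lia.
    + simpl. rewrite ln_1. lra.
    + replace (INR 2) with 2 by (simpl; lra). pose proof ln_lt_2. lra. Qed.

Lemma ln_nonneg n : (1 <= n)%nat -> 0 <= ln (INR n).
Proof. intros H. rewrite <- ln_1. destruct (Nat.eq_dec n 1) as [->|NE]. simpl; lra.
  left. apply ln_increasing. lra. apply lt_1_INR. lia. Qed.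

Lemma sumR_scal {A} (l : list A) c f : sumR (fun x => c * f x) l = c * sumR f l.
Proof. induction l; simpl; [lra|rewrite IHl; lra]. Qed.

Lemma Hn_nonneg n : 0 <= Hn n.
Proof. unfold Hn. apply sumR_nonneg. intros m _. destruct (pos_INR (n - m)) as [H|H].
  left; apply Rinv_0_lt_compat; auto. rewrite <- H, Rinv_0; lra. Qed.

Lemma final_arith alg n X0 : (1 <= n)%nat ->
  V alg n [X0] <= 108 * (INR n * INR (cplx X0) + INR n ^ 2 * ln (INR n) + 1).
Proof. intros Hn1.
  assert (HC : 0 <= INR (cplx X0)) by apply pos_INR.
  assert (HA : 0 < Ac alg n) by (apply Ac_pos; auto).
  assert (HV : V alg n [X0] <= Ac alg n * INR (cplx X0) + Vall alg n).
  { unfold V. destruct hasb.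
    - pose proof (V2_le_Vall alg n [X0]). nra.
    - unfold minc; simpl. rewrite Nat.min_id. lra. }
  set (K := 6 * INR n * INR (S n) / qf alg).
  assert (HVall : Vall alg n = K * Hn n).
  { unfold Vall, Hn. rewrite <- sumR_scal. apply sumR_ext. intros m _. unfold Dc, K.
    unfold Rdiv. rewrite Rinv_mult. ring. }
  pose proof (qf_bound alg) as Hq.
  assert (Hiq : / qf alg <= 3). { rewrite <- (Rinv_inv 3). apply Rinv_le_contravar; lra. }
  assert (Hiq0 : 0 < / qf alg) by (apply Rinv_0_lt_compat; lra).
  set (x := INR n). assert (Hx : 1 <= x) by (unfold x; apply le_INR in Hn1; simpl in Hn1; lra).
  assert (HSn : INR (S n) = x + 1) by (unfold x; rewrite S_INR; auto).
  assert (HAc : Ac alg n <= 18 * x).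
  { unfold Ac, Rdiv. rewrite HSn. nra. }
  assert (HK : K <= 36 * x ^ 2).
  { unfold K, Rdiv. rewrite HSn. fold x. simpl. nra. }
  assert (HK0 : 0 <= K) by (unfold K, Rdiv; rewrite HSn; fold x; nra).
  pose proof (Hn_bound n Hn1) as HH. pose proof (Hn_nonneg n).
  pose proof (ln_nonneg n Hn1). pose proof (ln_ge n Hn1). fold x in HH, H0, H1.
  set (L := ln x) in *.
  assert (Ac alg n * INR (cplx X0) <= 18 * x * INR (cplx X0)) by (apply Rmult_le_compat_r; auto).
  assert (K * Hn n <= 36 * x ^ 2 * (1 + L)) by (apply Rmult_le_compat; auto).
  assert (0 <= x ^ 2 * L) by (apply Rmult_le_pos; auto; apply pow2_ge_0).
  rewrite HVall in HV. nra. Qed.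

Theorem theorem4 :
  forall alg : algorithm,
  exists c : R, 0 < c /\
    forall (n : nat) (X0 : tree),
      (1 <= n)%nat -> valid_tree n X0 ->
      exists E : R,
        expected_time_is alg n X0 E /\
        E <= c * (INR n * INR (cplx X0) + INR n ^ 2 * ln (INR n) + 1).
Proof. intros alg. exists 108. split. lra. intros n X0 Hn1 HX0.
  destruct (expected_bound alg n Hn1 X0 HX0) as [E [H1 H2]]. exists E. split; auto.
  eapply Rle_trans; [exact H2|]. apply final_arith; auto. Qed.
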